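(* Let $D,E$ be Dyck paths with Dyck words $(d_i)_{i\ge1}$ and $(e_i)_{i\ge1}$. Then $D\le E$ in the poset $(\mathcal{D},\le)$ if and only if $d_i\le e_i$ for all $i\ge1$.
   Context: A Dyck path of length $2m$ ($m\ge0$) is a lattice path from $(0,0)$ to $(2m,0)$ with steps $\nearrow=(1,1)$, $\searrow=(1,-1)$ never going below the $x$-axis; write $P(x)$ for its height at abscissa $x$. Its Dyck word is the infinite $0$-$1$ sequence obtained by replacing $\nearrow$ by $1$, $\searrow$ by $0$, and appending infinitely many $0$'s. A cell is a point $(a,b)\in\mathbb{Z}^2$ with $b\ge0$, $a+b$ even (viewed as the tilted square with vertices $(a,b),(a+1,b\pm1),(a+2,b)$). The Dyck shape of $P$ (length $2m$) is $S(P)=\{(a,b): b\ge0,\ a+b\text{ even},\ 0\le a\le 2m-2,\ b+1\le P(a+1)\}$. Cells are adjacent if they differ by $(\pm1,\pm1)$. A ribbon is a nonempty set of cells, connected for adjacency, containing no four cells $(a,b),(a+1,b+1),(a+1,b-1),(a+2,b)$. For Dyck paths $D$ of length $2m$ and $E$ of length $2m+2$, $D\sqsubset E$ means $S(D)\subseteq S(E)$ and $S(E)\setminus S(D)$ is a ribbon. $(\mathcal{D},\le)$ is the set of all Dyck paths of all lengths (including the empty path) with $\le$ the reflexive and transitive closure of $\sqsubset$. *)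

(* Defs.v *)
From mathcomp Require Import all_boot all_order all_algebra.
From Stdlib Require Import Relations.Relation_Operators.
Set Implicit Arguments. Unset Strict Implicit. Unset Printing Implicit Defensive.
Import Order.TTheory GRing.Theory Num.Theory.
Local Open Scope ring_scope.

(* A lattice path is a seq bool: true = up-step (1,1), false = down-step (1,-1). *)

Definition height (s : seq bool) (x : nat) : int :=
  \sum_(i < x) (if nth false s i then 1 else -1).

Definition is_dyck (s : seq bool) : bool :=
  (height s (size s) == 0) && all (fun x => 0 <= height s x) (iota 0 (size s).+1).

Definition cell := (int * int)%type.

Definition in_shape (s : seq bool) (c : cell) : bool :=
  [&& 0 <= c.2, (2 %| c.1 + c.2)%Z, 0 <= c.1, c.1 <= (size s)%:Z - 2
    & c.2 + 1 <= height s (absz c.1).+1].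

Definition adjacent (c d : cell) : bool :=
  (`|c.1 - d.1| == 1) && (`|c.2 - d.2| == 1).

(* A ribbon: nonempty, connected for adjacency, no 2x2 block of four cells. *)
Definition ribbon (R : cell -> bool) : Prop :=
  (exists c, R c) /\
  (forall x y, R x -> R y ->
     exists p : seq cell, [/\ path adjacent x p, last x p = y & all R p]) /\
  ~ (exists a b : int,
       [&& R (a, b), R (a + 1, b + 1), R (a + 1, b - 1) & R (a + 2, b)]).

Definition cover (D E : seq bool) : Prop :=
  [/\ is_dyck D, is_dyck E, size E = (size D + 2)%N,
      (forall c, in_shape D c -> in_shape E c)
    & ribbon (fun c => in_shape E c && ~~ in_shape D c)].

Definition dyck_le : seq bool -> seq bool -> Prop := clos_refl_trans _ cover.

(* The i-th letter (i >= 1) of the Dyck word: d_i = nth false D (i-1),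
   padded with infinitely many 0's. *)
Definition dyck_word (s : seq bool) (i : nat) : nat := nat_of_bool (nth false s i.-1).

(* Main.v *)
Require Import Defs.
From mathcomp Require Import all_boot all_order all_algebra.
From mathcomp Require Import zify.
From Stdlib Require Import Relations.Relation_Operators.
Set Implicit Arguments. Unset Strict Implicit. Unset Printing Implicit Defensive.
Import Order.TTheory GRing.Theory Num.Theory.
Local Open Scope ring_scope.

Lemma height0 s : height s 0 = 0.
Proof. by rewrite /height big_ord0. Qed.

Lemma heightS s x : height s x.+1 = height s x + (if nth false s x then 1 else -1).
Proof. by rewrite /height big_ord_recr. Qed.

Definition ups (s : seq bool) (x : nat) : nat := (\sum_(i < x) nth false s i)%N.

Lemma upsS s x : ups s x.+1 = (ups s x + nth false s x)%N.
Proof. by rewrite /ups big_ord_recr. Qed.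

Lemma height_ups s x : height s x = 2 * (ups s x)%:Z - x%:Z.
Proof.
elim: x => [|x IH]; first by rewrite height0 /ups big_ord0.
rewrite heightS upsS IH; case: (nth false s x) => /=; lia.
Qed.

Lemma height_le s x : height s x <= x%:Z.
Proof.
have: (ups s x <= x)%N.
  elim: x => [|x IH]; first by rewrite /ups big_ord0.
  rewrite upsS; case: (nth false s x) => /=; lia.
rewrite height_ups; lia.
Qed.

Lemma dyck_nonneg s x : is_dyck s -> (x <= size s)%N -> 0 <= height s x.
Proof. move=> /andP[_ /allP H] hx; apply: H; rewrite mem_iota; lia. Qed.

Lemma dyck_end s : is_dyck s -> height s (size s) = 0.
Proof. by move=> /andP[/eqP]. Qed.

Lemma height_beyond s d : height s (size s + d) = height s (size s) - d%:Z.
Proof.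
elim: d => [|d IH]; first by rewrite addn0 subr0.
rewrite addnS heightS IH nth_default ?leq_addr //=; lia.
Qed.

Lemma height_step s x : height s x.+1 = height s x + 1 \/ height s x.+1 = height s x - 1.
Proof. rewrite heightS; case: (nth false s x); [left|right]; lia. Qed.

Lemma cross (R : cell -> bool) (K : int) x p :
  path adjacent x p -> all R p -> R x -> x.1 <= K -> K <= (last x p).1 ->
  exists z, R z /\ z.1 = K.
Proof.
elim: p x => [|y p IH] x /=.
  move=> _ _ Rx h1 h2; exists x; split=> //; lia.
move=> /andP[adj pth] /andP[Ry Rp] Rx h1 h2.
have [e|/eqP ne] := eqVneq x.1 K; first by exists x.
apply: (IH y) => //. move: adj; rewrite /adjacent => /andP[/eqP a _]; lia.
Qed.

Lemma cover_pw D E : Defs.cover D E -> forall k, nth false D k -> nth false E k.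
Proof.
case=> dD dE sE sub [_ [conn noblock]] k dk.
case ek: (nth false E k) => //.
have kn : (k < size D)%N.
  by rewrite ltnNge; apply/negP => h; rewrite nth_default in dk.
have hDS := heightS D k; rewrite dk in hDS.
have hES := heightS E k; rewrite ek in hES.
have le_sh : forall x, (x <= size D)%N -> height D x <= height E x.
  move=> x hx; have hE0 : 0 <= height E x by apply: dyck_nonneg => //; lia.
  have [h|h] := leP (height D x) 0; first lia.
  case: x hx h hE0 => [|a] hx h hE0; first by rewrite height0 in h.
  have hDe := dyck_end dD.
  have aD : (a.+1 < size D)%N.
    rewrite ltn_neqAle hx andbT; apply/eqP => e; rewrite e hDe in h; lia.
  have hp := height_ups D a.+1.
  have H : in_shape D (a%:Z, height D a.+1 - 1).
    rewrite /in_shape /=; lia.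
  move: (sub _ H); rewrite /in_shape /=; lia.
have hk0 : 0 <= height D k by apply: dyck_nonneg => //; lia.
have l1 := le_sh k.+1 kn.
have hDe := dyck_end dD.
have hEe := dyck_end dE.
have [hA|hA] := leP (height E k.+1) (height D k.+1).
- have hl := height_le E k.
  have [a ka] : exists a, k = a.+1 by exists k.-1; lia.
  subst k.
  pose R := fun c => in_shape E c && ~~ in_shape D c.
  have Rx0 : R (a%:Z, height E a.+1 - 1).
    have := height_ups E a.+1; rewrite /R /in_shape /=; lia.
  have Ry0 : R ((size D)%:Z, 0).
    have h1 : 0 <= height E (size D).+1 by apply: dyck_nonneg => //; lia.
    have h2 := height_step E (size D).+1.
    have h3 := height_ups D (size D).
    rewrite sE addn2 in hEe.
    rewrite /R /in_shape /=; rewrite sE; lia.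
  have [p [pth lst allp]] := conn _ _ Rx0 Ry0.
  have [[z1 z2] [Rz /= ez]] := cross (K := a.+1%:Z) pth allp Rx0 ltac:(simpl; lia)
     ltac:(rewrite lst /=; lia).
  subst z1.
  move: Rz; rewrite /R /in_shape /=.
  have := height_ups D a.+2; have := height_ups E a.+2.
  have : (a.+2 < size D)%N.
    rewrite ltn_neqAle kn andbT; apply/eqP => e; rewrite -e in hDe; lia.
  lia.
- have hl := height_le E k.
  have [a ka] : exists a, k = a.+2 by exists (k - 2)%N; lia.
  subst k.
  exfalso; apply: noblock; exists a%:Z, (height E a.+2 - 2).
  have -> : a%:Z + 1 = a.+1%:Z by lia.
  have -> : a%:Z + 2 = a.+2%:Z by lia.
  have := height_step E a.+1; have := height_step D a.+1.
  have := height_ups E a.+2.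
  rewrite /in_shape /= sE; lia.
Qed.

Definition add (s : seq bool) (k : nat) : seq bool :=
  mkseq (fun i => nth false s i || (i == k)) (size s + 2).

Lemma size_add s k : size (add s k) = (size s + 2)%N.
Proof. by rewrite size_mkseq. Qed.

Lemma nth_add s k i :
  nth false (add s k) i = (nth false s i || (i == k)) && (i < size s + 2)%N.
Proof.
case: (ltnP i (size s + 2)) => h.
  by rewrite nth_mkseq // andbT.
by rewrite nth_default ?size_mkseq // andbF.
Qed.

Lemma add_height s k : nth false s k = false -> (k <= size s)%N ->
  forall x, (x <= size s + 2)%N ->
  height (add s k) x = height s x + (if (k < x)%N then 2 else 0).
Proof.
move=> sk ks; elim=> [|x IH] hx; first by rewrite !height0.
rewrite !heightS IH; last lia.
rewrite nth_add (_ : (x < size s + 2)%N) ?andbT; last lia.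
have [->|ne] := eqVneq x k.
  by rewrite sk /= ltnn ltnSn /=; lia.
have e : (k < x.+1)%N = (k < x)%N by rewrite ltnS leq_eqVlt eq_sym (negbTE ne).
rewrite e orbF; case: (k < x)%N => /=; case: (nth false s x) => /=; lia.
Qed.

Lemma add_dyck s k : is_dyck s -> nth false s k = false -> (k <= size s)%N ->
  is_dyck (add s k).
Proof.
move=> ds sk ks; rewrite /is_dyck size_add; apply/andP; split.
  apply/eqP; rewrite add_height // height_beyond dyck_end //.
  by case: ifP => h; lia.
apply/allP => x; rewrite mem_iota add0n ltnS => /andP[_ hx].
rewrite add_height //.
case: (leqP x (size s)) => h.
  have := dyck_nonneg ds h; case: ifP => _; lia.
have [d ed] : exists d, x = (size s + d)%N by exists (x - size s)%N; lia.
subst x; rewrite height_beyond dyck_end //; case: ifP => h2; lia.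
Qed.

Lemma path_up (f : nat -> cell) n len :
  (forall i, (n <= i < n + len)%N -> adjacent (f i) (f i.+1)) ->
  path adjacent (f n) (map f (iota n.+1 len)) /\
  last (f n) (map f (iota n.+1 len)) = f (n + len)%N.
Proof.
elim: len n => [|len IH] n H; first by rewrite addn0.
rewrite /= -addSnnS; have [h1 h2] := IH n.+1 ltac:(move=> i hi; apply: H; lia).
split=> //; rewrite h1 andbT; apply: H; lia.
Qed.

Lemma add_cover s k : is_dyck s -> nth false s k = false -> (k <= size s)%N ->
  Defs.cover s (add s k).
Proof.
move=> ds sk ks; split.
- done.
- exact: add_dyck.
- exact: size_add.
- move=> [a b]; rewrite /in_shape /= size_add => /and5P[h1 h2 h3 h4 h5].
  rewrite h1 h2 h3 /=; apply/andP; split; first lia.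
  rewrite add_height //; last lia.
  case: ifP => _; lia.
pose R := fun c => in_shape (add s k) c && ~~ in_shape s c.
pose r := fun a : nat => (a%:Z, height s a.+1 + 1).
have hse := dyck_end ds.
have hb1 := height_beyond s 1.
have hev := height_ups s (size s).
have rin : forall a, (k <= a <= size s)%N -> R (r a).
  move=> a /andP[h1 h2]; rewrite /R /in_shape /= size_add add_height //; last lia.
  have := height_ups s a.+1.
  have : (a.+1 <= size s)%N -> 0 <= height s a.+1 by move=> h; apply: dyck_nonneg.
  have : a = size s -> height s a.+1 = -1 by move=> ->; rewrite -addn1 hb1; lia.
  case: ifP => h3; lia.
have rchar : forall c, R c -> exists a, (k <= a <= size s)%N /\ c = r a.
  move=> [a b]; rewrite /R.
  case/andP=> h1 h2.
  have [n en] : exists n : nat, a = n%:Z.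
    by exists (absz a); move: h1; rewrite /in_shape /=; lia.
  subst a.
  have hn : (n <= size s)%N by move: h1; rewrite /in_shape /= size_add; lia.
  move: h1 h2; rewrite /in_shape /= size_add add_height //; last lia.
  have := height_ups s n.+1.
  have : (n.+1 <= size s)%N -> 0 <= height s n.+1 by move=> h; apply: dyck_nonneg.
  have : n = size s -> height s n.+1 = -1 by move=> ->; rewrite -addn1 hb1; lia.
  have : n.+1 = size s -> height s n.+1 = 0 by move=> ->.
  case: ifP => h3 e0 e1 e2 e3 h1 h2.
    have eb : b = height s n.+1 + 1 by lia.
    exists n; split; [lia| by rewrite /r eb].
  exfalso; lia.
have radj : forall a, adjacent (r a) (r a.+1) /\ adjacent (r a.+1) (r a).
  move=> a; rewrite /adjacent /=; have := height_step s a.+1; split; lia.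
split; [|split].
- by exists (r k); apply: rin; lia.
- move=> x y Rx Ry.
  have [a [ha ->]] := rchar x Rx; have [b [hb ->]] := rchar y Ry.
  case: (leqP a b) => hab.
    have [p1 p2] := path_up (f := r) (n := a) (len := (b - a)%N)
      ltac:(move=> i _; exact: (radj i).1).
    exists (map r (iota a.+1 (b - a))); split => //.
      by rewrite p2; congr r; lia.
    apply/allP => z /mapP [j hj ->]; rewrite mem_iota in hj; apply: rin; lia.
  pose g := fun i => r (a - i)%N.
  have [p1 p2] := path_up (f := g) (n := 0) (len := (a - b)%N)
    ltac:(move=> i hi; rewrite /g (_ : (a - i = (a - i.+1).+1)%N); [exact: (radj _).2|lia]).
  exists (map g (iota 1 (a - b))); split.
  + by move: p1; rewrite /g subn0.
  + by move: p2; rewrite /g subn0 add0n => ->; congr r; lia.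
  + apply/allP => z /mapP [j hj ->]; rewrite mem_iota in hj; apply: rin; lia.
- move=> [a [b /and4P[_ R2 R3 _]]].
  have [n2 [_ e2]] := rchar _ R2; have [n3 [_ e3]] := rchar _ R3.
  case: e2 => e2a e2b; case: e3 => e3a e3b.
  have ee : n2 = n3 by lia.
  subst n3; lia.
Qed.

Definition pw (D E : seq bool) := forall k, nth false D k -> nth false E k.

Lemma ups_pw D E : pw D E -> forall N, (ups D N <= ups E N)%N.
Proof.
move=> h; elim=> [|N IH]; first by rewrite /ups !big_ord0.
rewrite !upsS; case hd: (nth false D N); first by rewrite (h _ hd); lia.
lia.
Qed.

Lemma ups_beyond s d : ups s (size s + d) = ups s (size s).
Proof.
elim: d => [|d IH]; first by rewrite addn0.
by rewrite addnS upsS IH nth_default ?leq_addr // addn0.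
Qed.

Lemma dyck_size s : is_dyck s -> size s = (2 * ups s (size s))%N.
Proof. move=> ds; have := height_ups s (size s); rewrite dyck_end //; lia. Qed.

Lemma size_le D E : is_dyck D -> is_dyck E -> pw D E -> (size D <= size E)%N.
Proof.
move=> dD dE h; have := ups_pw h (size D + size E).
rewrite ups_beyond addnC ups_beyond; have := dyck_size dD; have := dyck_size dE; lia.
Qed.

Lemma height_prefix D E x : (forall i, (i < x)%N -> nth false D i = nth false E i) ->
  height D x = height E x.
Proof.
elim: x => [|x IH] h; first by rewrite !height0.
by rewrite !heightS IH ?h // => i hi; apply: h; lia.
Qed.

Lemma step D E : is_dyck D -> is_dyck E -> pw D E ->
  D = E \/ exists D', [/\ Defs.cover D D', is_dyck D', pw D' E & size D' = (size D + 2)%N].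
Proof.
move=> dD dE h.
have [hh|hh] := boolP (has (fun k => ~~ nth false D k && nth false E k) (iota 0 (size E))).
  right.
  have ex : exists k, ~~ nth false D k && nth false E k.
    by case/hasP: hh => k _ hk; exists k.
  case: (ex_minnP ex) => k /andP[dk ek] kmin.
  have pre : forall i, (i < k)%N -> nth false D i = nth false E i.
    move=> i ik; case hd: (nth false D i); first by rewrite (h _ hd).
    case he: (nth false E i) => //.
    by have := kmin i; rewrite hd he /= => /(_ isT); rewrite leqNgt ik.
  have ks : (k <= size D)%N.
    rewrite leqNgt; apply/negP => lt.
    have kE : (k < size E)%N.
      by rewrite ltnNge; apply/negP => le; rewrite nth_default in ek.
    have e1 := height_prefix pre.
    have := height_beyond D (k - size D).
    rewrite subnKC; last exact: ltnW.
    rewrite dyck_end // => e2.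
    have nn := dyck_nonneg dE (ltnW kE); move: e1 e2 nn lt; clear; lia.
  have dk' : nth false D k = false by move: dk; case: (nth false D k).
  exists (add D k); split.
  - exact: add_cover.
  - exact: add_dyck.
  - move=> i; rewrite nth_add => /andP[/orP[/h //|/eqP -> //] _].
  - exact: size_add.
left.
have eqn : forall i, nth false D i = nth false E i.
  move=> i; case hd: (nth false D i); first by rewrite (h _ hd).
  case he: (nth false E i) => //.
  have iE : (i < size E)%N by rewrite ltnNge; apply/negP => le; rewrite nth_default in he.
  by move/hasPn: hh => /(_ i); rewrite mem_iota /= iE hd he => /(_ isT).
have pw2 : pw E D by move=> i; rewrite eqn.
apply: (eq_from_nth (x0 := false)) => [|i _]; last exact: eqn.
by apply/eqP; rewrite eqn_leq !size_le.
Qed.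

Lemma pw_dyck_le n D E : is_dyck D -> is_dyck E -> pw D E ->
  (size E - size D <= n)%N -> dyck_le D E.
Proof.
elim: n D => [|n IH] D dD dE h hn.
  case: (step dD dE h) => [->|[D' [c dD' h' sD']]]; first exact: rt_refl.
  have := size_le dD' dE h'; lia.
case: (step dD dE h) => [->|[D' [c dD' h' sD']]]; first exact: rt_refl.
apply: (rt_trans _ _ _ D'); first exact: rt_step.
apply: IH => //; have := size_le dD' dE h'; lia.
Qed.

Theorem mainTheorem4 (D E : seq bool) :
  is_dyck D -> is_dyck E ->
  (dyck_le D E <-> (forall i : nat, (1 <= i)%N -> (dyck_word D i <= dyck_word E i)%N)).
Proof.
move=> dD dE; split.
  move=> hle.
  have hp : pw D E.
    elim: hle => [x y c|x|x y z _ h1 _ h2].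
    - exact: cover_pw.
    - by [].
    - by move=> k /h1 /h2.
  move=> i _; rewrite /dyck_word.
  case hd: (nth false D i.-1) => //=.
  by rewrite (hp _ hd).
move=> H; apply: (pw_dyck_le (n := size E)) => //; last by rewrite leq_subr.
move=> k dk; have := H k.+1 isT; rewrite /dyck_word /= dk.
by case: (nth false E k).
Qed.
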